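(* Let $\lambda$ be a character of $\mathcal{G}r'$. Then $\lambda$ is invertible for the product $\star$ if and only if $\lambda(\bullet_A)\neq0$ for every nonempty finite set $A$, where $\bullet_A\in\mathcal{G}r'[A]$ is the graph with the single vertex $A$.
   Context: Work over a field $\mathbb{K}$. $\mathcal{G}r'[A]$ is the vector space spanned by simple graphs $G$ whose vertex set is a partition of the finite set $A$ into nonempty blocks; bijections act on the elements of $A$; the product is disjoint union of graphs. An equivalence $\sim$ on $A$ satisfies $\sim\triangleleft G$ if elements in the same vertex of $G$ are equivalent and the induced subgraph $G_{\mid C}$ (on the vertices contained in $C$) is connected for each class $C$; then $G\mid\sim$ is the disjoint union of the $G_{\mid C}$ and $G/\sim$ has the classes of $\sim$ as vertices, two distinct classes being adjacent iff some edge of $G$ joins vertices contained in them. A character of $\mathcal{G}r'$ is a family of linear forms $\lambda[A]:\mathcal{G}r'[A]\to\mathbb{K}$ invariant under bijections, with $\lambda(GH)=\lambda(G)\lambda(H)$ and $\lambda(\text{empty graph})=1$. The product of characters is $(\lambda\star\mu)(G)=\sum_{\sim\triangleleft G}\lambda(G/\sim)\mu(G\mid\sim)$; its unit is $\varepsilon'$, with $\varepsilon'(G)=1$ if $G$ has no edge and $0$ otherwise. *)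

(* Defs.v *)
From HB Require Import structures.
From mathcomp Require Import all_boot all_order all_algebra.
Set Implicit Arguments. Unset Strict Implicit. Unset Printing Implicit Defensive.
Import GRing.Theory.
Local Open Scope ring_scope.

(* A raw graph on the finite set T: a set of vertices (blocks, subsets of T)
   and a set of edges (each edge is a 2-element set of vertices). *)
Definition rawgraph (T : finType) : Type :=
  ({set {set T}} * {set {set {set T}}})%type.

(* Validity: vertices form a partition of T into nonempty blocks
   (mathcomp's [partition] includes [set0 \notin V]); edges are
   2-element subsets of the vertex set (simple graph). *)
Definition is_graph (T : finType) (g : rawgraph T) : bool :=
  partition g.1 [set: T] && [forall e in g.2, (e \subset g.1) && (#|e| == 2)].

Definition graph (T : finType) := {g : rawgraph T | is_graph g}.

Definition gV (T : finType) (G : graph T) : {set {set T}} := (val G).1.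
Definition gE (T : finType) (G : graph T) : {set {set {set T}}} := (val G).2.

(* A family of (values on the basis of the) linear forms lambda[T]. *)
Definition gfamily (K : fieldType) := forall T : finType, graph T -> K.

Definition bij_invariant (K : fieldType) (lam : gfamily K) : Prop :=
  forall (T T' : finType) (f : T -> T'), bijective f ->
  forall (G : graph T) (G' : graph T'),
    gV G' = [set f @: B | B : {set T} in gV G] ->
    gE G' = [set [set f @: B | B : {set T} in e] | e : {set {set T}} in gE G] ->
    lam T' G' = lam T G.

Definition multiplicative (K : fieldType) (lam : gfamily K) : Prop :=
  forall (T1 T2 : finType) (G1 : graph T1) (G2 : graph T2)
         (G : graph (T1 + T2)%type),
    gV G = [set inl @: B | B : {set T1} in gV G1] :|: [set inr @: B | B : {set T2} in gV G2] ->
    gE G = [set [set inl @: B | B : {set T1} in e] | e : {set {set T1}} in gE G1]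
           :|: [set [set inr @: B | B : {set T2} in e] | e : {set {set T2}} in gE G2] ->
    lam _ G = lam _ G1 * lam _ G2.

(* lambda(empty graph) = 1: the empty graph is the (unique) graph on the
   empty set. *)
Definition unital (K : fieldType) (lam : gfamily K) : Prop :=
  forall (T : finType), #|T| = 0%N -> forall G : graph T, lam T G = 1.

Definition is_character (K : fieldType) (lam : gfamily K) : Prop :=
  [/\ bij_invariant lam, multiplicative lam & unital lam].

Definition induced_connected (T : finType) (G : graph T) (C : {set T}) : bool :=
  let r := [rel v w : {set T} |
             ([set v; w] \in gE G) && (v \subset C) && (w \subset C)] in
  [forall v in gV G, forall w in gV G,
     (v \subset C) ==> (w \subset C) ==> connect r v w].

(* An equivalence ~ on T is represented by its set of classes Q (a partition
   of T).  Q <| G  : elements of a same vertex are equivalent and every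
   G_{|C} is connected. *)
Definition admissible (T : finType) (G : graph T) (Q : {set {set T}}) : bool :=
  [&& partition Q [set: T],
      [forall v in gV G, exists C in Q, v \subset C] &
      [forall C in Q, induced_connected G C]].

(* G / ~ : vertices = classes; distinct classes adjacent iff some edge of G
   joins vertices contained in them.  (Falls back to G on invalid input,
   which never happens for admissible Q.) *)
Definition quot_edges (T : finType) (G : graph T) (Q : {set {set T}})
  : {set {set {set T}}} :=
  [set [set C; D] | C in Q, D in Q &
     (C != D) && [exists e in gE G, exists v : {set T}, exists w : {set T},
        [&& e == [set v; w], v \subset C & w \subset D]]].

Definition quot (T : finType) (G : graph T) (Q : {set {set T}}) : graph T :=
  insubd G (Q, quot_edges G Q).

(* G | ~ : disjoint union of the G_{|C}: same vertices, edges of G inside a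
   class. *)
Definition restr_edges (T : finType) (G : graph T) (Q : {set {set T}})
  : {set {set {set T}}} :=
  [set e in gE G | [exists C in Q, [forall v in e, v \subset C]]].

Definition restr (T : finType) (G : graph T) (Q : {set {set T}}) : graph T :=
  insubd G (gV G, restr_edges G Q).

Definition star (K : fieldType) (lam mu : gfamily K) : gfamily K :=
  fun T G => \sum_(Q : {set {set T}} | admissible G Q)
               lam T (quot G Q) * mu T (restr G Q).

Arguments star {K} lam mu T G.

Definition eps' (K : fieldType) (T : finType) (G : graph T) : K :=
  if gE G == set0 then 1 else 0.

Arguments eps' K T G : clear implicits.

Definition star_invertible (K : fieldType) (lam : gfamily K) : Prop :=
  exists mu : gfamily K, is_character mu /\
    (forall (T : finType) (G : graph T),
       star lam mu T G = eps' K T G /\ star mu lam T G = eps' K T G).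

(* Main.v *)
Require Import Defs.
From HB Require Import structures.
From mathcomp Require Import all_boot all_order all_algebra.
From mathcomp Require Import ring.
Set Implicit Arguments. Unset Strict Implicit. Unset Printing Implicit Defensive.
Import GRing.Theory.
Local Open Scope ring_scope.

Lemma connect_ind (S : finType) (r : rel S) (P : S -> Prop) x y :
  connect r x y -> P x -> (forall a b, P a -> r a b -> P b) -> P y.
Proof.
case/connectP => p; elim: p x => [|z p IH] x /=; first by move=> _ ->.
case/andP=> rxz pth ey Px step; exact: (IH z pth ey (step _ _ Px rxz) step).
Qed.

Lemma connect_symm (S : finType) (r : rel S) x y :
  (forall a b, r a b -> r b a) -> connect r x y -> connect r y x.
Proof.
move=> sr cxy; apply: (connect_ind (P := fun a => connect r a x)) cxy _ _ => //.
move=> a b cax rab; apply: connect_trans (connect1 (sr _ _ rab)) cax.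
Qed.

Lemma connect_mono (S : finType) (r r' : rel S) x y :
  (forall a b, r a b -> r' a b) -> connect r x y -> connect r' x y.
Proof.
move=> h; apply: connect_sub => a b rab; exact/connect1/h.
Qed.

Lemma partP (T : finType) (P : {set {set T}}) :
  partition P [set: T] <->
  [/\ set0 \notin P,
      forall x, exists2 B, B \in P & x \in B &
      forall x B B', B \in P -> B' \in P -> x \in B -> x \in B' -> B = B'].
Proof.
split.
  move=> hP; have tP := partition_trivIset hP.
  case/and3P: hP => /eqP cP _ nP; split => //.
    move=> x; have xc : x \in cover P by rewrite cP inE.
    by exists (pblock P x); [exact: pblock_mem | rewrite mem_pblock].
  by move=> x B B' BP B'P xB xB'; rewrite -(def_pblock tP BP xB) (def_pblock tP B'P xB').
case=> nP cP uP; apply/and3P; split => //.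
  apply/eqP/setP => x; rewrite inE; apply/bigcupP.
  by case: (cP x) => B BP xB; exists B.
apply/trivIsetP => A B AP BP nAB; rewrite -setI_eq0; apply/eqP/setP => x.
rewrite inE in_set0; apply/negP => /andP[xA xB]; case/eqP: nAB; exact: uP xA xB.
Qed.

Lemma set2_eq (S : finType) (a b c d : S) :
  [set a; b] = [set c; d] -> (a = c /\ b = d) \/ (a = d /\ b = c).
Proof.
move=> e.
have ha : a \in [set c; d] by rewrite -e !inE eqxx.
have hb : b \in [set c; d] by rewrite -e !inE eqxx orbT.
have hc : c \in [set a; b] by rewrite e !inE eqxx.
have hd : d \in [set a; b] by rewrite e !inE eqxx orbT.
case/set2P: ha => ?; case/set2P: hb => ?; subst; auto;
case/set2P: hc => ?; case/set2P: hd => ?; subst; auto.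
Qed.

Section Basic.
Variable T : finType.
Implicit Types (G : graph T) (Q : {set {set T}}).

Lemma gVP G : partition (gV G) [set: T].
Proof. by case: G => [[V E] H]; rewrite /gV /=; case/andP: H. Qed.

Lemma gEP G e : e \in gE G ->
  exists v w, [/\ v \in gV G, w \in gV G, v != w & e = [set v; w]].
Proof.
case: G => [[V E] HG]; rewrite /gE /gV /= => eE.
have /andP[_ /forall_inP H] := HG.
have /andP[sub c2] := H e eE.
case/cards2P: c2 => v [w [vw ee]]; exists v, w; split => //;
  apply: (subsetP sub); rewrite ee !inE eqxx ?orbT //.
Qed.

Lemma edge_vert G v w : [set v; w] \in gE G ->
  [/\ v \in gV G, w \in gV G & v != w].
Proof.
case/gEP => a [b [aV bV ab /set2_eq [[-> ->]|[-> ->]]]]; split => //.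
by rewrite eq_sym.
Qed.

Lemma part_uniq Q (x : T) B B' : partition Q [set: T] ->
  B \in Q -> B' \in Q -> x \in B -> x \in B' -> B = B'.
Proof. by case/partP => _ _ h; apply: h. Qed.

Lemma part_cover Q (x : T) : partition Q [set: T] -> exists2 B, B \in Q & x \in B.
Proof. by case/partP => _ h _; apply: h. Qed.

Lemma part_neq0 Q B : partition Q [set: T] -> B \in Q -> exists x, x \in B.
Proof. by move=> hQ BQ; apply/set0Pn; exact: partition_neq0 hQ BQ. Qed.

Lemma sub_uniq Q (v B B' : {set T}) : partition Q [set: T] -> (exists x, x \in v) ->
  B \in Q -> B' \in Q -> v \subset B -> v \subset B' -> B = B'.
Proof.
move=> hQ [x xv] BQ B'Q vB vB'.
exact: (part_uniq hQ BQ B'Q (subsetP vB x xv) (subsetP vB' x xv)).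
Qed.

Lemma vert_neq0 G v : v \in gV G -> exists x, x \in v.
Proof. exact: part_neq0 (gVP G). Qed.

Lemma vert_sub G v w : v \in gV G -> w \in gV G -> v \subset w -> v = w.
Proof.
move=> vV wV vw; apply: (sub_uniq (gVP G) (vert_neq0 vV) vV wV) => //.
Qed.

Lemma admP G Q : admissible G Q <->
  [/\ partition Q [set: T],
      (forall v, v \in gV G -> exists2 C, C \in Q & v \subset C) &
      (forall C, C \in Q -> induced_connected G C)].
Proof.
split.
  case/and3P => hQ /forall_inP h1 /forall_inP h2; split => // v vV.
  by case/exists_inP: (h1 v vV) => C CQ vC; exists C.
case=> hQ h1 h2; apply/and3P; split => //; apply/forall_inP => // v vV.
by case: (h1 v vV) => C CQ vC; apply/exists_inP; exists C.
Qed.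

Definition adjr G (C : {set T}) : rel {set T} :=
  [rel v w | ([set v; w] \in gE G) && (v \subset C) && (w \subset C)].

Lemma icP G C : induced_connected G C <->
  (forall v w, v \in gV G -> w \in gV G -> v \subset C -> w \subset C ->
     connect (adjr G C) v w).
Proof.
rewrite /induced_connected /=; split.
  move/forall_inP => H v w vV wV vC wC.
  by have /forall_inP := H v vV; move/(_ w wV); rewrite vC wC.
move=> H; apply/forall_inP => v vV; apply/forall_inP => w wV.
by apply/implyP => vC; apply/implyP => wC; apply: H.
Qed.

Lemma adjr_sym G C a b : adjr G C a b -> adjr G C b a.
Proof. by rewrite /adjr /= => /andP[/andP[h -> ->]]; rewrite setUC h. Qed.

Lemma cls_vert G Q C (x : T) : admissible G Q -> C \in Q -> x \in C ->
  exists v, [/\ v \in gV G, x \in v & v \subset C].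
Proof.
case/admP => hQ h1 _ CQ xC.
case: (part_cover x (gVP G)) => v vV xv; exists v; split => //.
case: (h1 v vV) => C' C'Q vC'.
by rewrite (part_uniq hQ CQ C'Q xC (subsetP vC' x xv)).
Qed.

Lemma cls_has_vert G Q C : admissible G Q -> C \in Q ->
  exists v, v \in gV G /\ v \subset C.
Proof.
move=> hA CQ; case/admP: (hA) => hQ _ _.
case: (part_neq0 hQ CQ) => x xC.
by case: (cls_vert hA CQ xC) => v [vV _ vC]; exists v.
Qed.

Lemma vert_cls G Q v : admissible G Q -> v \in gV G -> exists2 C, C \in Q & v \subset C.
Proof. by case/admP => _ h _; apply: h. Qed.

Lemma quot_edgesP G Q e : reflect
  (exists C D v w, [/\ C \in Q, D \in Q, C != D &
      [/\ [set v; w] \in gE G, v \subset C, w \subset D & e = [set C; D]]])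
  (e \in quot_edges G Q).
Proof.
apply: (iffP imset2P).
  case=> C D CQ; rewrite inE => /andP[DQ /andP[CD /exists_inP[e' e'E /existsP[v /existsP[w /and3P[/eqP ee vC wD]]]]]] ->.
  by exists C, D, v, w; split => //; rewrite -ee.
case=> C [D [v [w [CQ DQ CD [vwE vC wD ->]]]]].
exists C D => //; rewrite inE DQ CD /=; apply/exists_inP; exists [set v; w] => //.
by apply/existsP; exists v; apply/existsP; exists w; rewrite eqxx vC wD.
Qed.

Lemma quot_edge2 G Q X Y : [set X; Y] \in quot_edges G Q ->
  [/\ X \in Q, Y \in Q, X != Y &
   exists a b, [/\ [set a; b] \in gE G, a \subset X & b \subset Y]].
Proof.
case/quot_edgesP => C [D [v [w [CQ DQ CD [vwE vC wD /set2_eq [[-> ->]|[-> ->]]]]]]].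
  by split => //; exists v, w.
split => //; first by rewrite eq_sym.
by exists w, v; rewrite setUC.
Qed.

Lemma quot_edge2I G Q X Y a b : X \in Q -> Y \in Q -> X != Y ->
  [set a; b] \in gE G -> a \subset X -> b \subset Y -> [set X; Y] \in quot_edges G Q.
Proof.
move=> XQ YQ XY abE aX bY; apply/quot_edgesP.
by exists X, Y, a, b; split.
Qed.

Lemma is_graph_quot G Q : partition Q [set: T] -> is_graph (Q, quot_edges G Q).
Proof.
move=> hQ; apply/andP; split => //=; apply/forall_inP => e /quot_edgesP.
case=> C [D [v [w [CQ DQ CD [_ _ _ ->]]]]].
rewrite cards2 CD andbT; apply/subsetP => x /set2P [] ->//.
Qed.

Lemma is_graph_restr G Q : is_graph (gV G, restr_edges G Q).
Proof.
apply/andP; split => /=; first exact: gVP.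
apply/forall_inP => e; rewrite inE => /andP[eE _].
case/gEP: eE => v [w [vV wV vw ->]].
rewrite cards2 vw andbT; apply/subsetP => x /set2P [] ->//.
Qed.

Lemma quot_val G Q : partition Q [set: T] -> val (quot G Q) = (Q, quot_edges G Q).
Proof. by move=> hQ; rewrite /quot insubdK //; exact: is_graph_quot. Qed.

Lemma restr_val G Q : val (restr G Q) = (gV G, restr_edges G Q).
Proof. by rewrite /restr insubdK //; exact: is_graph_restr. Qed.

Lemma gV_quot G Q : partition Q [set: T] -> gV (quot G Q) = Q.
Proof. by move=> hQ; rewrite /gV quot_val. Qed.
Lemma gE_quot G Q : partition Q [set: T] -> gE (quot G Q) = quot_edges G Q.
Proof. by move=> hQ; rewrite /gE quot_val. Qed.
Lemma gV_restr G Q : gV (restr G Q) = gV G.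
Proof. by rewrite /gV restr_val. Qed.
Lemma gE_restr G Q : gE (restr G Q) = restr_edges G Q.
Proof. by rewrite /gE restr_val. Qed.

Lemma restrP G Q e : e \in restr_edges G Q <->
  e \in gE G /\ exists2 C, C \in Q & forall v, v \in e -> v \subset C.
Proof.
rewrite inE; split.
  by case/andP => eE /exists_inP[C CQ /forall_inP h]; split => //; exists C.
case=> eE [C CQ h]; rewrite eE; apply/exists_inP; exists C => //.
by apply/forall_inP => v ve; apply: h.
Qed.

Lemma restr2P G Q v w : [set v; w] \in restr_edges G Q <->
  [set v; w] \in gE G /\ exists2 C, C \in Q & (v \subset C) && (w \subset C).
Proof.
split.
  case/restrP => eE [C CQ h]; split => //; exists C => //.
  by rewrite !h // !inE eqxx ?orbT.
case=> eE [C CQ h]; apply/restrP; split => //; exists C => //.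
by case/andP: h => vC wC u /set2P [] ->.
Qed.

Lemma restr_sub G Q : restr_edges G Q \subset gE G.
Proof. by apply/subsetP => e /restrP []. Qed.

Lemma graph_eq G G' : gV G = gV G' -> gE G = gE G' -> G = G'.
Proof.
move=> hV hE; apply: val_inj; move: hV hE; rewrite /gV /gE.
by case: (val G) => ? ?; case: (val G') => ? ? /= -> ->.
Qed.

Lemma restr_full G Q : restr_edges G Q = gE G -> restr G Q = G.
Proof. by move=> h; apply: graph_eq; rewrite ?gV_restr ?gE_restr. Qed.

End Basic.

Section Comp.
Variable T : finType.
Implicit Types (G : graph T) (Q : {set {set T}}).

Definition adj G : rel {set T} := [rel v w | [set v; w] \in gE G].
Definition comp G (v : {set T}) : {set T} :=
  \bigcup_(w | (w \in gV G) && connect (adj G) v w) w.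
Definition Qc G := [set comp G v | v in gV G].

Lemma adj_sym G a b : adj G a b -> adj G b a.
Proof. by rewrite /adj /= setUC. Qed.

Lemma conn_sym G a b : connect (adj G) a b -> connect (adj G) b a.
Proof. by apply: connect_symm; apply: adj_sym. Qed.

Lemma conn_vert G a b : a \in gV G -> connect (adj G) a b -> b \in gV G.
Proof.
move=> aV c; apply: (connect_ind (P := fun u => u \in gV G)) c aV _.
by move=> u u' _ /edge_vert [].
Qed.

Lemma compP G v x : reflect (exists w, [/\ w \in gV G, connect (adj G) v w & x \in w])
  (x \in comp G v).
Proof.
apply: (iffP bigcupP).
  by case=> w /andP[wV c] xw; exists w.
by case=> w [wV c xw]; exists w => //; rewrite wV.
Qed.

Lemma conn_sub_comp G v u : u \in gV G -> connect (adj G) v u -> u \subset comp G v.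
Proof. by move=> uV c; apply/subsetP => x xu; apply/compP; exists u. Qed.

Lemma sub_comp G v : v \in gV G -> v \subset comp G v.
Proof. by move=> vV; apply: conn_sub_comp. Qed.

Lemma comp_eq G v v' : connect (adj G) v v' -> comp G v = comp G v'.
Proof.
move=> c; apply/setP => x; apply/compP/compP => [[w [wV c' xw]]|[w [wV c' xw]]];
  exists w; split => //.
  exact: connect_trans (conn_sym c) c'.
exact: connect_trans c c'.
Qed.

Lemma in_comp_conn G v w : w \in gV G -> w \subset comp G v -> connect (adj G) v w.
Proof.
move=> wV wc; case: (vert_neq0 wV) => x xw.
case/compP: (subsetP wc x xw) => u [uV c xu].
by rewrite (part_uniq (gVP G) wV uV xw xu).
Qed.

Lemma Qc_part G : partition (Qc G) [set: T].
Proof.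
apply/partP; split.
- apply/negP => /imsetP[v vV e]; case: (vert_neq0 vV) => x xv.
  by have := subsetP (sub_comp vV) x xv; rewrite -e in_set0.
- move=> x; case: (part_cover x (gVP G)) => v vV xv.
  by exists (comp G v); [apply: imset_f | apply: (subsetP (sub_comp vV))].
move=> x B B' /imsetP[v vV ->] /imsetP[v' v'V ->].
case/compP => w [wV c xw]; case/compP => w' [w'V c' xw'].
have ww : w = w' by apply: (part_uniq (gVP G) wV w'V xw xw').
apply: comp_eq; apply: connect_trans c _; rewrite ww; exact: conn_sym.
Qed.

Lemma lift_conn G (C : {set T}) a b : connect (adj G) a b -> a \in gV G ->
  (forall u, u \in gV G -> connect (adj G) a u -> u \subset C) ->
  connect (adjr G C) a b.
Proof.
move=> c aV h.
suff : [/\ b \in gV G, connect (adj G) a b & connect (adjr G C) a b] by case.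
apply: (connect_ind (P := fun u => [/\ u \in gV G, connect (adj G) a u & connect (adjr G C) a u])) c _ _.
  by split => //; apply: connect0.
move=> u u' [uV cu cu'] e; have [_ u'V _] := edge_vert e.
have cau' : connect (adj G) a u' by apply: connect_trans cu (connect1 e).
split => //; apply: connect_trans cu' (connect1 _).
have e' : [set u; u'] \in gE G := e.
by rewrite /adjr /= e' (h u uV cu) (h u' u'V cau').
Qed.

Lemma adjr_adj G C a b : adjr G C a b -> adj G a b.
Proof. by case/andP => /andP[]. Qed.

Lemma Qc_adm G : admissible G (Qc G).
Proof.
apply/admP; split; first exact: Qc_part.
  by move=> v vV; exists (comp G v); [apply: imset_f | apply: sub_comp].
move=> C /imsetP[v vV ->]; apply/icP => w w' wV w'V wc w'c.
have cw := in_comp_conn wV wc; have cw' := in_comp_conn w'V w'c.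
apply: lift_conn (connect_trans (conn_sym cw) cw') wV _.
move=> u uV cu; apply: conn_sub_comp uV (connect_trans cw cu).
Qed.

Lemma Qc_full G : restr_edges G (Qc G) = gE G.
Proof.
apply/eqP; rewrite eqEsubset restr_sub; apply/subsetP => e eE.
case/gEP: (eE) => v [w [vV wV vw ee]]; rewrite ee; apply/restr2P; split; first by rewrite -ee.
exists (comp G v); first by apply: imset_f.
rewrite sub_comp //=; apply: conn_sub_comp wV (connect1 _).
by rewrite /adj /= -ee.
Qed.

Lemma Qc_uniq G Q : admissible G Q -> restr_edges G Q = gE G -> Q = Qc G.
Proof.
move=> hA hF.
have hQ : partition Q [set: T] by case/admP: hA.
have key : forall v C, v \in gV G -> C \in Q -> v \subset C -> C = comp G v.
  move=> v C vV CQ vC; apply/eqP; rewrite eqEsubset; apply/andP; split.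
    apply/subsetP => x xC; case: (cls_vert hA CQ xC) => w [wV xw wC].
    have c : connect (adjr G C) v w.
      by case/admP: (hA) => _ _ h; exact: (iffLR (icP G C) (h C CQ) v w vV wV vC wC).
    apply/compP; exists w; split => //; apply: connect_mono c; exact: adjr_adj.
  apply/subsetP => x /compP[w [wV c xw]].
  suff [] : w \in gV G /\ w \subset C by move=> _ /subsetP; apply.
  apply: (connect_ind (P := fun u => u \in gV G /\ u \subset C)) c _ _ => //.
  move=> u u' [uV uC] e; have [_ u'V _] := edge_vert e.
  move: e; rewrite /adj /= -hF => /restr2P [_ [C' C'Q /andP[uC' u'C']]].
  by rewrite (sub_uniq hQ (vert_neq0 uV) CQ C'Q uC uC').
apply/setP => C; apply/idP/imsetP.
  move=> CQ; case: (cls_has_vert hA CQ) => v [vV vC].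
  by exists v => //; apply: key.
case=> v vV ->; case: (vert_cls hA vV) => C' C'Q vC'.
by rewrite -(key v C' vV C'Q vC').
Qed.

Lemma full_quot0 G Q : admissible G Q -> restr_edges G Q = gE G -> quot_edges G Q = set0.
Proof.
move=> hA hF; have hQ : partition Q [set: T] by case/admP: hA.
apply/setP => e; rewrite in_set0; apply/negP.
case/quot_edgesP => C [D [v [w [CQ DQ CD [vwE vC wD _]]]]].
have [vV wV _] := edge_vert vwE.
move: vwE; rewrite -hF => /restr2P[_ [E EQ /andP[vE wE]]].
case/negP: CD; apply/eqP.
by rewrite (sub_uniq hQ (vert_neq0 vV) CQ EQ vC vE) (sub_uniq hQ (vert_neq0 wV) DQ EQ wD wE).
Qed.


Lemma quot0_full G Q : admissible G Q -> quot_edges G Q = set0 -> restr_edges G Q = gE G.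
Proof.
move=> hA h0; apply/eqP; rewrite eqEsubset restr_sub; apply/subsetP => e eE.
case/gEP: (eE) => v [w [vV wV vw ee]].
case: (vert_cls hA vV) => C CQ vC; case: (vert_cls hA wV) => D DQ wD.
have [CD|nCD] := eqVneq C D.
  by rewrite ee; apply/restr2P; split; [rewrite -ee | exists C => //; rewrite vC CD wD].
have : [set C; D] \in quot_edges G Q by apply: quot_edge2I CQ DQ nCD _ vC wD; rewrite -ee.
by rewrite h0 in_set0.
Qed.

Lemma gV_adm G : admissible G (gV G).
Proof.
apply/admP; split; first exact: gVP.
  by move=> v vV; exists v.
move=> C CV; apply/icP => w w' wV w'V wC w'C.
by rewrite (vert_sub wV CV wC) (vert_sub w'V CV w'C) connect0.
Qed.

Lemma restr0_gV G Q : admissible G Q -> restr_edges G Q = set0 -> Q = gV G.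
Proof.
move=> hA h0.
have key : forall C, C \in Q -> C \in gV G.
  move=> C CQ; case: (cls_has_vert hA CQ) => v [vV vC].
  suff -> : C = v by [].
  apply/eqP; rewrite eqEsubset vC andbT; apply/subsetP => x xC.
  case: (cls_vert hA CQ xC) => w [wV xw wC].
  have c : connect (adjr G C) v w.
    by case/admP: (hA) => _ _ h; exact: (iffLR (icP G C) (h C CQ) v w vV wV vC wC).
  suff <- : w = v by [].
  apply: (connect_ind (P := fun u => u = v)) c _ _ => // a b -> /andP[/andP[e aC] bC].
  have : [set v; b] \in restr_edges G Q by apply/restr2P; split => //; exists C => //; rewrite aC bC.
  by rewrite h0 in_set0.
apply/setP => C; apply/idP/idP; first exact: key.
move=> CV; case: (vert_cls hA CV) => D DQ CD.
by rewrite (vert_sub CV (key D DQ) CD).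
Qed.

Lemma gV_restr0 G : restr_edges G (gV G) = set0.
Proof.
apply/setP => e; rewrite in_set0; apply/negP => /restrP[eE [C CV h]].
case/gEP: eE => v [w [vV wV vw ee]]; move: h; rewrite ee => h.
have e1 := vert_sub vV CV (h v (set21 _ _)).
have e2 := vert_sub wV CV (h w (set22 _ _)).
by case/negP: vw; rewrite e1 e2.
Qed.

Lemma quot_gV G : quot G (gV G) = G.
Proof.
apply: graph_eq; first by rewrite gV_quot // gVP.
rewrite gE_quot ?gVP //; apply/setP => e; apply/idP/idP.
  case/quot_edgesP => C [D [v [w [CV DV CD [vwE vC wD ->]]]]].
  have [vV wV _] := edge_vert vwE.
  by rewrite -(vert_sub vV CV vC) -(vert_sub wV DV wD).
move=> eE; case/gEP: (eE) => v [w [vV wV vw ee]].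
by rewrite ee; apply: quot_edge2I vV wV vw _ (subxx _) (subxx _); rewrite -ee.
Qed.

Lemma restr_lt G Q : restr_edges G Q != gE G -> (#|gE (restr G Q)| < #|gE G|)%N.
Proof. by move=> h; rewrite gE_restr; apply: proper_card; rewrite properEneq h restr_sub. Qed.

Lemma edgeless_full G Q : gE G = set0 -> restr_edges G Q = gE G.
Proof. by move=> h; apply/eqP; rewrite eqEsubset restr_sub h sub0set. Qed.

End Comp.

Section Star.
Variables (K : fieldType) (T : finType).
Implicit Types (G : graph T) (Q : {set {set T}}) (l m : graph T -> K).

Definition starT l m G : K :=
  \sum_(Q : {set {set T}} | admissible G Q) l (quot G Q) * m (restr G Q).

Definition epsT G : K := eps' K T G.

Lemma starT_eps_r l G : starT l epsT G = l G.
Proof.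
rewrite /starT (bigD1 (gV G)) ?gV_adm //= big1 ?addr0.
  by rewrite /epsT /eps' gE_restr gV_restr0 eqxx mulr1 quot_gV.
move=> Q /andP[hA nQ]; rewrite /epsT /eps' gE_restr.
case: eqP => [h0|]; last by rewrite mulr0.
by case/eqP: nQ; apply: restr0_gV.
Qed.

Lemma starT_eps_l l G : starT epsT l G = l G.
Proof.
rewrite /starT (bigD1 (Qc G)) ?Qc_adm //= big1 ?addr0.
  rewrite /epsT /eps' gE_quot ?Qc_part // full_quot0 ?Qc_adm ?Qc_full // eqxx mul1r.
  by rewrite restr_full ?Qc_full.
move=> Q /andP[hA nQ]; rewrite /epsT /eps' gE_quot; last by case/admP: hA.
case: eqP => [h0|]; last by rewrite mul0r.
by case/eqP: nQ; apply: Qc_uniq => //; apply: quot0_full.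
Qed.

Lemma starT_split l m G : starT l m G = l (quot G (Qc G)) * m G +
  \sum_(Q | admissible G Q && (restr_edges G Q != gE G)) l (quot G Q) * m (restr G Q).
Proof.
rewrite /starT (bigD1 (Qc G)) ?Qc_adm //= restr_full ?Qc_full //; congr (_ + _).
apply: eq_bigl => Q; case hA: (admissible G Q) => //=.
apply/idP/idP => h; apply/negP => /eqP h'; move/negP: h; apply.
  by apply/eqP; apply: Qc_uniq.
by rewrite h' Qc_full.
Qed.

Fixpoint rinvF l n G : K :=
  if n is n'.+1 then
    (epsT G - \sum_(Q | admissible G Q && (restr_edges G Q != gE G))
                l (quot G Q) * rinvF l n' (restr G Q)) / l (quot G (Qc G))
  else 0.

Definition rinv l G : K := rinvF l (#|gE G|).+1 G.

Lemma rinvF_stable l (n k : nat) G : (#|gE G| < n)%N -> (#|gE G| < k)%N -> rinvF l n G = rinvF l k G.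
Proof.
elim: n k G => [|n IH] [|k] G //= hn hm.
congr ((_ - _) / _); apply: eq_bigr => Q /andP[_ hQ]; congr (_ * _).
by apply: IH; apply: leq_trans (restr_lt hQ) _.
Qed.

Definition nz_edgeless l := forall H, gE H = set0 -> l H != 0.

Lemma rinv_star l G : nz_edgeless l -> starT l (rinv l) G = epsT G.
Proof.
move=> nz; rewrite starT_split {1}/rinv /=.
have c0 : l (quot G (Qc G)) != 0 by apply: nz; rewrite gE_quot ?Qc_part ?full_quot0 ?Qc_adm ?Qc_full.
set S := (X in _ + X).
set S' := \sum_(Q | _) _ * rinvF _ _ _.
have -> : S' = S.
  apply: eq_bigr => Q /andP[_ hQ]; congr (_ * _); rewrite /rinv.
  by apply: rinvF_stable => //; apply: restr_lt.
by rewrite mulrC divfK // subrK.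
Qed.

Lemma rinv_edgeless l H : nz_edgeless l -> gE H = set0 -> rinv l H != 0.
Proof.
move=> nz h0; have := rinv_star H nz; rewrite starT_split big1 ?addr0.
  by rewrite /epsT /eps' h0 eqxx => e; apply/negP => /eqP r0; move: e; rewrite r0 mulr0 => /eqP; rewrite eq_sym oner_eq0.
by move=> Q /andP[_]; rewrite edgeless_full // eqxx.
Qed.

End Star.

Section Assoc.
Variable T : finType.
Implicit Types (G : graph T) (Q R : {set {set T}}).

Definition refines Q R := forall C, C \in Q -> exists2 D, D \in R & C \subset D.

Lemma adjr_mono G (C D : {set T}) a b : C \subset D -> adjr G C a b -> adjr G D a b.
Proof.
move=> CD /andP[/andP[e aC] bC]; rewrite /adjr /= e.
by rewrite (subset_trans aC CD) (subset_trans bC CD).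
Qed.

Lemma ic_conn G C v w : induced_connected G C -> v \in gV G -> w \in gV G ->
  v \subset C -> w \subset C -> connect (adjr G C) v w.
Proof. by move/icP; apply. Qed.

Lemma adm_ic G Q C : admissible G Q -> C \in Q -> induced_connected G C.
Proof. by case/admP => _ _; apply. Qed.

Lemma adm_part G Q : admissible G Q -> partition Q [set: T].
Proof. by case/admP. Qed.

Lemma cls_in G Q R v C D : admissible G Q -> partition R [set: T] -> refines Q R ->
  v \in gV G -> C \in Q -> D \in R -> v \subset C -> v \subset D -> C \subset D.
Proof.
move=> hQ hR ref vV CQ DR vC vD; case: (ref C CQ) => D' D'R CD'.
by rewrite (sub_uniq hR (vert_neq0 vV) DR D'R vD (subset_trans vC CD')).
Qed.

Section Eqs.
Variables (G : graph T) (Q R : {set {set T}}).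
Hypotheses (hQ : admissible G Q) (hR : partition R [set: T]) (ref : refines Q R).
Let hQp := adm_part hQ.

Lemma E1 : quot (quot G Q) R = quot G R.
Proof.
apply: graph_eq; first by rewrite !gV_quot.
rewrite !gE_quot //; apply/setP => e; apply/idP/idP.
  case/quot_edgesP => C [D [v [w [CR DR CD [vwE vC wD ->]]]]].
  move: vwE; rewrite gE_quot // => /quot_edge2 [vQ wQ _ [a [b [abE av bw]]]].
  by apply: quot_edge2I CR DR CD abE (subset_trans av vC) (subset_trans bw wD).
case/quot_edgesP => C [D [v [w [CR DR CD [vwE vC wD ->]]]]].
have [vV wV _] := edge_vert vwE.
case: (vert_cls hQ vV) => C' C'Q vC'; case: (vert_cls hQ wV) => D' D'Q wD'.
have C'C := cls_in hQ hR ref vV C'Q CR vC' vC.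
have D'D := cls_in hQ hR ref wV D'Q DR wD' wD.
apply: (quot_edge2I CR DR CD _ C'C D'D); rewrite gE_quot //.
apply: (quot_edge2I C'Q D'Q _ vwE vC' wD').
apply/eqP => eCD; case/negP: CD; apply/eqP.
case: (part_neq0 hQp C'Q) => x xC'.
apply: (part_uniq hR CR DR (subsetP C'C x xC')); rewrite eCD in xC'.
exact: (subsetP D'D x xC').
Qed.

Lemma E2 : restr (quot G Q) R = quot (restr G R) Q.
Proof.
apply: graph_eq; first by rewrite gV_restr !gV_quot.
rewrite gE_restr gE_quot //; apply/setP => e; apply/idP/idP.
  case/restrP; rewrite gE_quot // => /quot_edgesP [C [C' [v [w [CQ C'Q CC' [vwE vC wC' ee]]]]]].
  case=> D DR h; rewrite ee in h *.
  apply: (quot_edge2I CQ C'Q CC' _ vC wC'); rewrite gE_restr; apply/restr2P; split => //.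
  exists D => //; rewrite (subset_trans vC (h _ (set21 _ _))).
  by rewrite (subset_trans wC' (h _ (set22 _ _))).
case/quot_edgesP => C [C' [v [w [CQ C'Q CC' [vwE vC wC' ->]]]]].
move: vwE; rewrite gE_restr => /restr2P [vwE [D DR /andP[vD wD]]].
have [vV wV _] := edge_vert vwE.
apply/restr2P; split; first by rewrite gE_quot //; apply: (quot_edge2I CQ C'Q CC' vwE vC wC').
exists D => //; rewrite (cls_in hQ hR ref vV CQ DR vC vD).
by rewrite (cls_in hQ hR ref wV C'Q DR wC' wD).
Qed.

Lemma E3 : restr (restr G R) Q = restr G Q.
Proof.
apply: graph_eq; first by rewrite !gV_restr.
rewrite !gE_restr; apply/setP => e; apply/idP/idP.
  case/restrP; rewrite gE_restr => /restrP [eE _] h; exact/restrP.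
case/restrP => eE [C CQ h]; apply/restrP; split; last by exists C.
rewrite gE_restr; apply/restrP; split => //.
by case: (ref CQ) => D DR CD; exists D => // u ue; apply: subset_trans (h u ue) CD.
Qed.
End Eqs.

Lemma condA_ref G Q R : admissible (quot G Q) R -> partition Q [set: T] -> refines Q R.
Proof. by move=> hR hQ C CQ; case/admP: hR => _ h _; apply: h; rewrite gV_quot. Qed.

Lemma L1 G Q R (D : {set T}) : admissible G Q -> partition R [set: T] -> refines Q R ->
  D \in R -> induced_connected (quot G Q) D -> induced_connected G D.
Proof.
move=> hQ hR ref DR icD; have hQp := adm_part hQ.
apply/icP => v w vV wV vD wD.
case: (vert_cls hQ vV) => Cv CvQ vCv; case: (vert_cls hQ wV) => Cw CwQ wCw.
have CvD := cls_in hQ hR ref vV CvQ DR vCv vD.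
have CwD := cls_in hQ hR ref wV CwQ DR wCw wD.
have c : connect (adjr (quot G Q) D) Cv Cw by apply: ic_conn; rewrite ?gV_quot.
pose P X := [/\ X \in Q, X \subset D & forall u, u \in gV G -> u \subset X -> connect (adjr G D) v u].
suff [] : P Cw by move=> _ _; apply.
apply: (connect_ind (P := P)) c _ _.
  split => // u uV uCv; apply: connect_mono (ic_conn (adm_ic hQ CvQ) vV uV vCv uCv).
  by move=> a b; apply: adjr_mono.
move=> X X' [XQ XD h] /andP[/andP[e _] X'D]; move: e; rewrite gE_quot //.
case/quot_edge2 => _ X'Q _ [a [b [abE aX bX']]].
have [aV bV _] := edge_vert abE.
split => // u uV uX'.
have c1 : connect (adjr G D) v a := h a aV aX.
have c2 : adjr G D a b by rewrite /adjr /= abE (subset_trans aX XD) (subset_trans bX' X'D).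
have c3 : connect (adjr G D) b u.
  by apply: connect_mono (ic_conn (adm_ic hQ X'Q) bV uV bX' uX') => a' b'; apply: adjr_mono.
exact: connect_trans c1 (connect_trans (connect1 c2) c3).
Qed.

Lemma L2 G R (C D : {set T}) : induced_connected G C -> C \subset D -> D \in R ->
  induced_connected (restr G R) C.
Proof.
move=> icC CD DR; apply/icP => v w; rewrite gV_restr => vV wV vC wC.
apply: connect_mono (ic_conn icC vV wV vC wC) => a b /andP[/andP[e aC] bC].
rewrite /adjr /= aC bC gE_restr !andbT; apply/restr2P; split => //.
by exists D => //; rewrite (subset_trans aC CD) (subset_trans bC CD).
Qed.

Lemma L3 G Q R (C : {set T}) : admissible G R -> admissible (restr G R) Q -> C \in Q ->
  exists2 D, D \in R & C \subset D.
Proof.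
move=> hR hQ CQ; have hRp := adm_part hR.
case: (cls_has_vert hQ CQ) => v []; rewrite gV_restr => vV vC.
case: (vert_cls hR vV) => D DR vD; exists D => //.
apply/subsetP => x xC; case: (cls_vert hQ CQ xC) => w []; rewrite gV_restr => wV xw wC.
have c := ic_conn (adm_ic hQ CQ) (v := v) (w := w); rewrite !gV_restr in c.
have {}c := c vV wV vC wC.
suff [] : w \in gV G /\ w \subset D by move=> _ /subsetP; apply.
apply: (connect_ind (P := fun u => u \in gV G /\ u \subset D)) c _ _ => //.
move=> u u' [uV uD] /andP[/andP[e _] _]; move: e; rewrite gE_restr => /restr2P[e [D' D'R /andP[uD' u'D']]].
have [_ u'V _] := edge_vert e.
by rewrite (sub_uniq hRp (vert_neq0 uV) DR D'R uD uD').
Qed.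

Lemma L4 G Q R (D : {set T}) : admissible G Q -> partition R [set: T] -> refines Q R ->
  D \in R -> induced_connected G D -> induced_connected (quot G Q) D.
Proof.
move=> hQ hR ref DR icD; have hQp := adm_part hQ.
apply/icP => X X'; rewrite gV_quot // => XQ X'Q XD X'D.
case: (cls_has_vert hQ XQ) => v [vV vX]; case: (cls_has_vert hQ X'Q) => w [wV wX'].
have c := ic_conn icD vV wV (subset_trans vX XD) (subset_trans wX' X'D).
pose P u := u \in gV G /\ forall Y, Y \in Q -> u \subset Y -> connect (adjr (quot G Q) D) X Y.
suff [] : P w by move=> _; apply.
apply: (connect_ind (P := P)) c _ _.
  split => // Y YQ vY; rewrite (sub_uniq hQp (vert_neq0 vV) YQ XQ vY vX); exact: connect0.
move=> u u' [uV h] /andP[/andP[e uD] u'D]; have [_ u'V _] := edge_vert e.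
split => // Y' Y'Q u'Y'; case: (vert_cls hQ uV) => Y YQ uY.
apply: connect_trans (h Y YQ uY) _.
have [->|YY'] := eqVneq Y Y'; first exact: connect0.
apply: connect1; rewrite /adjr /= gE_quot // (quot_edge2I YQ Y'Q YY' e uY u'Y') /=.
by rewrite (cls_in hQ hR ref uV YQ DR uY uD) (cls_in hQ hR ref u'V Y'Q DR u'Y' u'D).
Qed.

Lemma condAB G Q R :
  (admissible G Q && admissible (quot G Q) R) = (admissible G R && admissible (restr G R) Q).
Proof.
apply/idP/idP.
  case/andP => hQ hR'; have hQp := adm_part hQ.
  have ref := condA_ref hR' hQp.
  have hRp : partition R [set: T] by case/admP: hR'.
  have icR : forall D, D \in R -> induced_connected (quot G Q) D by case/admP: hR'.
  have hR : admissible G R.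
    apply/admP; split => //.
      move=> v vV; case: (vert_cls hQ vV) => C CQ vC; case: (ref C CQ) => D DR CD.
      by exists D => //; apply: subset_trans vC CD.
    by move=> D DR; apply: L1 hQ hRp ref DR (icR D DR).
  rewrite hR /=; apply/admP; split => //.
    by move=> v; rewrite gV_restr; apply: vert_cls.
  move=> C CQ; case: (ref C CQ) => D DR CD; exact: (L2 (adm_ic hQ CQ) CD DR).
case/andP => hR hQ'; have hRp := adm_part hR.
have hQp := adm_part hQ'.
have hQ : admissible G Q.
  apply/admP; split => //.
    by move=> v vV; apply: vert_cls hQ' _; rewrite gV_restr.
  move=> C CQ; apply/icP => v w vV wV vC wC.
  have := ic_conn (adm_ic hQ' CQ) (v := v) (w := w); rewrite !gV_restr => /(_ vV wV vC wC).
  apply: connect_mono => a b /andP[/andP[e aC] bC]; rewrite /adjr /= aC bC !andbT.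
  by move: e; rewrite gE_restr => /restr2P[].
have ref : refines Q R by move=> C CQ; apply: L3 hR hQ' CQ.
rewrite hQ /=; apply/admP; split => //.
  by move=> C; rewrite gV_quot //; apply: ref.
by move=> D DR; apply: L4 hQ hRp ref DR (adm_ic hR DR).
Qed.

Variable K : fieldType.

Lemma starT_assoc (l m n : graph T -> K) G :
  starT (starT l m) n G = starT l (starT m n) G.
Proof.
pose F Q R := l (quot G R) * m (quot (restr G R) Q) * n (restr G Q).
transitivity (\sum_Q \sum_R (if admissible G Q && admissible (quot G Q) R then F Q R else 0)).
  rewrite /starT big_mkcond; apply: eq_bigr => Q _.
  case hQ: (admissible G Q); last by rewrite big1.
  rewrite mulr_suml big_mkcond; apply: eq_bigr => R _ /=.
  case hR: (admissible (quot G Q) R); last by [].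
  have hRp : partition R [set: T] by case/admP: hR.
  have ref := condA_ref hR (adm_part hQ).
  by rewrite /F E1 // E2 //.
rewrite exchange_big /=; symmetry.
rewrite /starT big_mkcond; apply: eq_bigr => R _.
case hR: (admissible G R); last by rewrite big1 // => Q _; rewrite condAB hR.
rewrite mulr_sumr big_mkcond; apply: eq_bigr => Q _ /=.
rewrite condAB hR /=.
case hQ: (admissible (restr G R) Q); last by [].
have /andP[hQ' hR'] : admissible G Q && admissible (quot G Q) R by rewrite condAB hR hQ.
have hRp := adm_part hR.
have ref := condA_ref hR' (adm_part hQ').
by rewrite /F E3 // mulrA.
Qed.

End Assoc.

Section TwoSided.
Variables (K : fieldType) (T : finType).

Lemma rinv_left (l : graph T -> K) G : nz_edgeless l -> starT (rinv l) l G = @epsT K T G.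
Proof.
move=> nz; set m := rinv l.
have nzm : nz_edgeless m by move=> H h; apply: rinv_edgeless.
set r := rinv m.
have lr : forall H, l H = r H.
  move=> H; rewrite -(starT_eps_r l H).
  transitivity (starT l (starT m r) H).
    by apply: eq_bigr => Q _; rewrite rinv_star.
  rewrite -starT_assoc; transitivity (starT (@epsT K T) r H).
    by apply: eq_bigr => Q _; rewrite rinv_star.
  by rewrite starT_eps_l.
transitivity (starT m r G); first by apply: eq_bigr => Q _; rewrite lr.
by rewrite rinv_star.
Qed.

End TwoSided.

Definition Fv (T U : finType) (f : T -> U) (V : {set {set T}}) : {set {set U}} :=
  [set f @: B | B : {set T} in V].
Definition Fe (T U : finType) (f : T -> U) (E : {set {set {set T}}}) : {set {set {set U}}} :=
  [set Fv f e | e : {set {set T}} in E].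

Section Img.
Variables (T U : finType) (f : T -> U).
Hypothesis inj : injective f.

Lemma sub_im (A B : {set T}) : (f @: A \subset f @: B) = (A \subset B).
Proof.
apply/idP/idP; last exact: imsetS.
move/subsetP => h; apply/subsetP => x xA.
by have := h (f x) (imset_f f xA); rewrite mem_imset.
Qed.

Lemma Fv_inj : injective (Fv f).
Proof. exact: imset_inj (imset_inj inj). Qed.

Lemma imV_inj : injective (fun A : {set T} => f @: A).
Proof. exact: imset_inj. Qed.

Lemma Fv2 (a b : {set T}) : Fv f [set a; b] = [set f @: a; f @: b].
Proof. by rewrite /Fv imsetU !imset_set1. Qed.

Lemma Fv_mem (V : {set {set T}}) (a : {set T}) : (f @: a \in Fv f V) = (a \in V).
Proof. by rewrite /Fv mem_imset //; exact: imV_inj. Qed.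

Lemma Fe_mem (E : {set {set {set T}}}) e : (Fv f e \in Fe f E) = (e \in E).
Proof. by rewrite /Fe mem_imset //; exact: Fv_inj. Qed.

End Img.

Lemma im_preim (T U : finType) (f : T -> U) (C : {set U}) :
  C \subset f @: setT -> f @: (f @^-1: C) = C.
Proof.
move=> h; apply/setP => z; apply/imsetP/idP.
  by case=> x; rewrite inE => xC ->.
move=> zC; case/imsetP: (subsetP h z zC) => x _ ezx.
by exists x => //; rewrite inE -ezx.
Qed.

Definition split_of (T1 T2 U : finType) (f1 : T1 -> U) (f2 : T2 -> U) :=
  [/\ injective f1, injective f2, (forall x y, f1 x != f2 y) &
      forall u, (exists x, u = f1 x) \/ (exists y, u = f2 y)].

Lemma split_sym (T1 T2 U : finType) (f1 : T1 -> U) (f2 : T2 -> U) :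
  split_of f1 f2 -> split_of f2 f1.
Proof.
case=> i1 i2 d c; split => // [x y|u]; first by rewrite eq_sym.
by case: (c u); [right|left].
Qed.

Definition UQ (T1 T2 U : finType) (f1 : T1 -> U) (f2 : T2 -> U)
  (Q1 : {set {set T1}}) (Q2 : {set {set T2}}) : {set {set U}} := Fv f1 Q1 :|: Fv f2 Q2.

Definition GU (T1 T2 U : finType) (f1 : T1 -> U) (f2 : T2 -> U)
  (G1 : graph T1) (G2 : graph T2) (G : graph U) :=
  gV G = UQ f1 f2 (gV G1) (gV G2) /\ gE G = Fe f1 (gE G1) :|: Fe f2 (gE G2).

Lemma UQC (T1 T2 U : finType) (f1 : T1 -> U) (f2 : T2 -> U) Q1 Q2 :
  UQ f1 f2 Q1 Q2 = UQ f2 f1 Q2 Q1.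
Proof. by rewrite /UQ setUC. Qed.

Lemma GU_sym (T1 T2 U : finType) (f1 : T1 -> U) (f2 : T2 -> U) G1 G2 G :
  GU f1 f2 G1 G2 G -> GU f2 f1 G2 G1 G.
Proof. by case=> hV hE; split; rewrite ?hV ?hE 1?setUC // UQC. Qed.

Section Split1.
Variables (T1 T2 U : finType) (f1 : T1 -> U) (f2 : T2 -> U).
Hypothesis sp : split_of f1 f2.

Lemma sp_inj1 : injective f1. Proof. by case: sp. Qed.
Lemma sp_inj2 : injective f2. Proof. by case: sp. Qed.
Lemma sp_disj x y : f1 x != f2 y. Proof. by case: sp. Qed.
Lemma sp_cov u : (exists x, u = f1 x) \/ (exists y, u = f2 y). Proof. by case: sp. Qed.

Lemma im_disj (a : {set T1}) (b : {set T2}) x : x \in a -> f2 @: b != f1 @: a.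
Proof.
move=> xa; apply/eqP => e.
have : f1 x \in f2 @: b by rewrite e imset_f.
by case/imsetP => y _ /eqP; rewrite (negbTE (sp_disj _ _)).
Qed.

Lemma pt_notin2 (b : {set T2}) x : f1 x \notin f2 @: b.
Proof. by apply/negP => /imsetP[y _ /eqP]; rewrite (negbTE (sp_disj _ _)). Qed.

Lemma UQ_pt1 (Q1 : {set {set T1}}) (Q2 : {set {set T2}}) (C : {set U}) x : C \in UQ f1 f2 Q1 Q2 -> f1 x \in C ->
  exists2 C1, C1 \in Q1 & C = f1 @: C1 /\ x \in C1.
Proof.
case/setUP => /imsetP[C' C'Q ->] xC.
  by exists C' => //; split => //; rewrite mem_imset // in xC; exact: sp_inj1.
by rewrite (negbTE (pt_notin2 _ _)) in xC.
Qed.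

Lemma UQ_side1 (Q1 : {set {set T1}}) (Q2 : {set {set T2}}) (C : {set U}) (a : {set T1}) : C \in UQ f1 f2 Q1 Q2 ->
  (exists x, x \in a) -> f1 @: a \subset C ->
  exists2 C1, C1 \in Q1 & C = f1 @: C1 /\ a \subset C1.
Proof.
move=> CU [x xa] aC.
case: (UQ_pt1 CU (subsetP aC _ (imset_f f1 xa))) => C1 C1Q [eC _].
by exists C1 => //; split => //; rewrite -(sub_im sp_inj1) -eC.
Qed.

Lemma UQ_part1 (Q1 : {set {set T1}}) (Q2 : {set {set T2}}) : partition (UQ f1 f2 Q1 Q2) [set: U] -> partition Q1 [set: T1].
Proof.
case/partP => n0 c u; apply/partP; split.
- apply/negP => h0; case/negP: n0; apply/setUP; left.
  by rewrite -(imset0 f1); apply: imset_f.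
- move=> x; case: (c (f1 x)) => C CU xC.
  by case: (UQ_pt1 CU xC) => C1 C1Q [_ xC1]; exists C1.
move=> x B B' BQ B'Q xB xB'.
have h1 : f1 @: B \in UQ f1 f2 Q1 Q2 by rewrite inE imset_f.
have h2 : f1 @: B' \in UQ f1 f2 Q1 Q2 by rewrite inE imset_f.
apply: (imV_inj sp_inj1); exact: (u (f1 x) _ _ h1 h2 (imset_f f1 xB) (imset_f f1 xB')).
Qed.

Lemma UQ_inj1 (Q1 : {set {set T1}}) (Q2 : {set {set T2}}) : set0 \notin Q2 -> Q1 = [set C1 : {set T1} | f1 @: C1 \in UQ f1 f2 Q1 Q2].
Proof.
move=> n0; apply/setP => C1; rewrite inE; apply/idP/idP.
  by move=> h; rewrite inE imset_f.
case/setUP => /imsetP[C' C'Q e].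
  by rewrite (imV_inj sp_inj1 e).
have : C' != set0.
  by apply/negP => /eqP h; move: n0; rewrite -h C'Q.
case/set0Pn => y yC'.
have : f2 y \in f1 @: C1 by rewrite e imset_f.
case/imsetP => x _ /eqP hxy.
by move: (sp_disj x y); rewrite eq_sym hxy.
Qed.

End Split1.

Section Split2.
Variables (T1 T2 U : finType) (f1 : T1 -> U) (f2 : T2 -> U).
Hypothesis sp : split_of f1 f2.

Lemma UQ_part (Q1 : {set {set T1}}) (Q2 : {set {set T2}}) : partition Q1 [set: T1] -> partition Q2 [set: T2] ->
  partition (UQ f1 f2 Q1 Q2) [set: U].
Proof.
move=> /partP[n1 c1 u1] /partP[n2 c2 u2]; apply/partP; split.
- apply/negP => /setUP[] /imsetP[C CQ /esym/eqP]; rewrite imset_eq0 => /eqP C0.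
    by rewrite -C0 CQ in n1.
  by rewrite -C0 CQ in n2.
- move=> u; case: (sp_cov sp u) => [[x ->]|[y ->]].
    by case: (c1 x) => C CQ xC; exists (f1 @: C); rewrite ?inE ?imset_f.
  by case: (c2 y) => C CQ yC; exists (f2 @: C); rewrite ?inE ?imset_f ?orbT.
move=> u B B' BU B'U uB uB'.
case: (sp_cov sp u) => [[x ex]|[y ey]]; subst u.
  case: (UQ_pt1 sp BU uB) => C C1 [-> xC]; case: (UQ_pt1 sp B'U uB') => C' C'1 [-> xC'].
  by rewrite (u1 x C C').
rewrite UQC in BU B'U.
case: (UQ_pt1 (split_sym sp) BU uB) => C C1 [-> xC].
case: (UQ_pt1 (split_sym sp) B'U uB') => C' C'1 [-> xC'].
by rewrite (u2 y C C').
Qed.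

Lemma UQ_inj (Q1 Q1' : {set {set T1}}) (Q2 Q2' : {set {set T2}}) : set0 \notin Q1 -> set0 \notin Q2 -> set0 \notin Q1' ->
  set0 \notin Q2' -> UQ f1 f2 Q1 Q2 = UQ f1 f2 Q1' Q2' -> Q1 = Q1' /\ Q2 = Q2'.
Proof.
move=> n1 n2 n1' n2' e; split.
  by rewrite (UQ_inj1 sp Q1 n2) (UQ_inj1 sp Q1' n2') e.
rewrite (UQ_inj1 (split_sym sp) Q2 n1) (UQ_inj1 (split_sym sp) Q2' n1').
by rewrite -(UQC f1 f2 Q1 Q2) -(UQC f1 f2 Q1' Q2') e.
Qed.

End Split2.

Section Split3.
Variables (T1 T2 U : finType) (f1 : T1 -> U) (f2 : T2 -> U).
Hypothesis sp : split_of f1 f2.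
Variables (G1 : graph T1) (G2 : graph T2) (G : graph U).
Hypothesis hU : GU f1 f2 G1 G2 G.

Let inj1 := sp_inj1 sp.

Lemma vert_im1 v : v \in gV G1 -> f1 @: v \in gV G.
Proof. by move=> vV; case: hU => -> _; rewrite inE imset_f. Qed.

Lemma Fe_im1 e : e \in gE G1 -> Fv f1 e \in gE G.
Proof. by move=> eE; case: hU => _ ->; rewrite inE /Fe imset_f. Qed.

Lemma edge_im1 (a b : {set T1}) : [set a; b] \in gE G1 -> [set f1 @: a; f1 @: b] \in gE G.
Proof. by move=> e; rewrite -Fv2; apply: Fe_im1. Qed.

Lemma vert_pt1 u x : u \in gV G -> f1 x \in u -> exists2 v, v \in gV G1 & u = f1 @: v /\ x \in v.
Proof. by case: hU => hV _; rewrite hV => uV xu; apply: (UQ_pt1 sp uV xu). Qed.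

Lemma vert_in1 u (C1 : {set T1}) : u \in gV G -> u \subset f1 @: C1 ->
  exists2 v, v \in gV G1 & u = f1 @: v /\ v \subset C1.
Proof.
move=> uV uC; case: (vert_neq0 uV) => z zu.
case/imsetP: (subsetP uC z zu) => x _ ezx; rewrite ezx in zu.
case: (vert_pt1 uV zu) => v vV [ev _]; exists v => //; split => //.
by rewrite -(sub_im inj1) -ev.
Qed.

Lemma edge_side1 e (a : {set T1}) x : e \in gE G -> x \in a -> f1 @: a \in e ->
  exists2 e1, e1 \in gE G1 & e = Fv f1 e1.
Proof.
case: hU => _ ->; case/setUP => /imsetP[e' e'E ->] xa ae; first by exists e'.
case/imsetP: ae => b _ eab.
by move: (im_disj sp b xa); rewrite eab eqxx.
Qed.

Lemma edge_dec1 (a : {set T1}) (w : {set U}) : a \in gV G1 -> [set f1 @: a; w] \in gE G ->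
  exists b : {set T1}, w = f1 @: b /\ [set a; b] \in gE G1.
Proof.
move=> aV e; case: (vert_neq0 aV) => x xa.
case: (edge_side1 e xa (set21 _ _)) => e1 e1E ee.
case/gEP: (e1E) => p [q [pV qV pq ee1]].
have ew : w \in Fv f1 e1 by rewrite -ee set22.
rewrite ee1 Fv2 in ew.
have [b [ewb bpq]] : exists b : {set T1}, w = f1 @: b /\ b \in [set p; q].
  by case/set2P: ew => ->; [exists p | exists q]; rewrite !inE eqxx ?orbT.
exists b; split => //.
suff -> : [set a; b] = e1 by [].
by apply: (Fv_inj inj1); rewrite -ee ewb Fv2.
Qed.

Lemma ic_push1 (C1 : {set T1}) : induced_connected G1 C1 -> induced_connected G (f1 @: C1).
Proof.
move=> ic; apply/icP => u u' uV u'V uC u'C.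
case: (vert_in1 uV uC) => v vV [-> vC]; case: (vert_in1 u'V u'C) => v' v'V [-> v'C].
have c := ic_conn ic vV v'V vC v'C.
pose P (a : {set T1}) := connect (adjr G (f1 @: C1)) (f1 @: v) (f1 @: a).
change (P v'); apply: (connect_ind (P := P)) c _ _.
  exact: connect0.
move=> a b ca /andP[/andP[e aC] bC]; apply: connect_trans ca (connect1 _).
by rewrite /adjr /= (edge_im1 e) !(sub_im inj1) aC bC.
Qed.

Lemma ic_pull1 (C1 : {set T1}) : induced_connected G (f1 @: C1) -> induced_connected G1 C1.
Proof.
move=> ic; apply/icP => v v' vV v'V vC v'C.
have c := ic_conn ic (vert_im1 vV) (vert_im1 v'V) (imsetS f1 vC) (imsetS f1 v'C).
pose P (a : {set U}) := exists b : {set T1}, [/\ a = f1 @: b, b \in gV G1 & connect (adjr G1 C1) v b].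
suff [b [eb bV cb]] : P (f1 @: v') by rewrite (imV_inj inj1 eb).
apply: (connect_ind (P := P)) c _ _.
  by exists v; split => //; apply: connect0.
move=> a a' [b [-> bV cb]] /andP[/andP[e aC] a'C].
case: (edge_dec1 bV e) => b' [eb' e1]; have [_ b'V _] := edge_vert e1.
exists b'; split => //; apply: connect_trans cb (connect1 _).
by rewrite /adjr /= e1 -(sub_im inj1) aC -(sub_im inj1) -eb' a'C.
Qed.

Lemma cls_side1 Q (C : {set U}) v : admissible G Q -> C \in Q -> v \in gV G1 ->
  f1 @: v \subset C -> C \subset f1 @: setT.
Proof.
move=> hA CQ vV vC; apply/subsetP => z zC.
case: (cls_vert hA CQ zC) => u [uV zu uC].
have c := ic_conn (adm_ic hA CQ) (vert_im1 vV) uV vC uC.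
pose P (a : {set U}) := exists2 b : {set T1}, b \in gV G1 & a = f1 @: b.
suff [b _ eb] : P u by move: zu; rewrite eb; apply/subsetP/imsetS/subsetT.
apply: (connect_ind (P := P)) c _ _; first by exists v.
move=> a a' [b bV ->] /andP[/andP[e _] _].
case: (edge_dec1 bV e) => b' [-> e1]; have [_ b'V _] := edge_vert e1.
by exists b'.
Qed.

Lemma qe_push1 (Q1 : {set {set T1}}) (Q2 : {set {set T2}}) e1 :
  e1 \in quot_edges G1 Q1 -> Fv f1 e1 \in quot_edges G (UQ f1 f2 Q1 Q2).
Proof.
case/quot_edgesP => C [D [v [w [CQ DQ CD [vwE vC wD ->]]]]].
rewrite Fv2; apply: (quot_edge2I _ _ _ (edge_im1 vwE)); rewrite ?imsetS //.
- by rewrite inE imset_f.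
- by rewrite inE imset_f.
by apply/negP => /eqP /(imV_inj inj1) /eqP; apply/negP.
Qed.

Lemma qe_pull1 (Q1 : {set {set T1}}) (Q2 : {set {set T2}}) (C D : {set U}) a w :
  C \in UQ f1 f2 Q1 Q2 -> D \in UQ f1 f2 Q1 Q2 -> C != D -> a \in gV G1 ->
  [set f1 @: a; w] \in gE G -> f1 @: a \subset C -> w \subset D ->
  [set C; D] \in Fe f1 (quot_edges G1 Q1).
Proof.
move=> CU DU CD aV e aC wD.
case: (edge_dec1 aV e) => b [ewb e1]; have [_ bV _] := edge_vert e1.
case: (UQ_side1 sp CU (vert_neq0 aV) aC) => C1 C1Q [eC aC1].
rewrite ewb in wD.
case: (UQ_side1 sp DU (vert_neq0 bV) wD) => D1 D1Q [eD bD1].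
rewrite eC eD -(Fv2 f1) (Fe_mem inj1).
apply: (quot_edge2I C1Q D1Q _ e1 aC1 bD1).
by apply/negP => /eqP e'; move: CD; rewrite eC eD e' eqxx.
Qed.

Lemma re_push1 (Q1 : {set {set T1}}) (Q2 : {set {set T2}}) e1 :
  e1 \in restr_edges G1 Q1 -> Fv f1 e1 \in restr_edges G (UQ f1 f2 Q1 Q2).
Proof.
case/restrP => e1E [C1 C1Q h]; apply/restrP; split; first exact: Fe_im1.
exists (f1 @: C1); first by rewrite inE imset_f.
by move=> u /imsetP[u1 u1e ->]; rewrite sub_im // h.
Qed.

Lemma re_pull1 (Q1 : {set {set T1}}) (Q2 : {set {set T2}}) e1 : e1 \in gE G1 ->
  Fv f1 e1 \in restr_edges G (UQ f1 f2 Q1 Q2) -> e1 \in restr_edges G1 Q1.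
Proof.
move=> e1E /restrP[_ [C CU h]]; apply/restrP; split => //.
case/gEP: (e1E) => a [b [aV _ _ ee]].
have aC : f1 @: a \subset C by apply: h; rewrite ee Fv2 set21.
case: (UQ_side1 sp CU (vert_neq0 aV) aC) => C1 C1Q [eC _].
exists C1 => // u1 u1e; rewrite -(sub_im inj1) -eC; apply: h; exact: imset_f.
Qed.

Lemma adm_pre1 Q (Q1 : {set {set T1}}) (Q2 : {set {set T2}}) : admissible G Q ->
  Q = UQ f1 f2 Q1 Q2 -> admissible G1 Q1.
Proof.
move=> hA eQ; apply/admP; split.
- by apply: (UQ_part1 sp (Q2 := Q2)); rewrite -eQ; apply: adm_part hA.
- move=> v vV; case: (vert_cls hA (vert_im1 vV)) => C CQ vC.
  rewrite eQ in CQ; case: (UQ_side1 sp CQ (vert_neq0 vV) vC) => C1 C1Q [_ vC1].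
  by exists C1.
move=> C1 C1Q; apply: ic_pull1; apply: (adm_ic hA); rewrite eQ inE imset_f //.
Qed.

End Split3.

Section Split4.
Variables (T1 T2 U : finType) (f1 : T1 -> U) (f2 : T2 -> U).
Hypothesis sp : split_of f1 f2.
Variables (G1 : graph T1) (G2 : graph T2) (G : graph U).
Hypothesis hU : GU f1 f2 G1 G2 G.

Let sp' := split_sym sp.
Let hU' := GU_sym hU.

Lemma adm_push (Q1 : {set {set T1}}) (Q2 : {set {set T2}}) :
  admissible G1 Q1 -> admissible G2 Q2 -> admissible G (UQ f1 f2 Q1 Q2).
Proof.
move=> h1 h2; apply/admP; split.
- by have := UQ_part sp (adm_part h1) (adm_part h2).
- move=> u; case: (hU) => -> _; case/setUP => /imsetP[v vV ->].
    by case: (vert_cls h1 vV) => C CQ vC; exists (f1 @: C); rewrite ?inE ?imset_f ?imsetS.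
  by case: (vert_cls h2 vV) => C CQ vC; exists (f2 @: C); rewrite ?inE ?imset_f ?imsetS ?orbT.
move=> C; case/setUP => /imsetP[C1 C1Q ->].
  exact: (ic_push1 sp hU (adm_ic h1 C1Q)).
exact: (ic_push1 sp' hU' (adm_ic h2 C1Q)).
Qed.

Lemma adm_decomp Q : admissible G Q -> exists Q1, exists Q2,
  [/\ admissible G1 Q1, admissible G2 Q2 & Q = UQ f1 f2 Q1 Q2].
Proof.
move=> hA.
pose Q1 := [set C1 : {set T1} | f1 @: C1 \in Q].
pose Q2 := [set C2 : {set T2} | f2 @: C2 \in Q].
have eQ : Q = UQ f1 f2 Q1 Q2.
  apply/setP => C; apply/idP/idP.
    move=> CQ; case: (cls_has_vert hA CQ) => u [uV uC].
    move: (uV); case: (hU) => -> _; case/setUP => /imsetP[v vV ev]; rewrite ev in uC.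
      have := cls_side1 sp hU hA CQ vV uC => /im_preim eC.
      by rewrite inE -eC imset_f // inE eC.
    have := cls_side1 sp' hU' hA CQ vV uC => /im_preim eC.
    by rewrite inE -eC imset_f ?orbT // inE eC.
  by case/setUP => /imsetP[C1]; rewrite inE => h ->.
exists Q1, Q2; split => //.
  exact: (adm_pre1 sp hU hA eQ).
by apply: (adm_pre1 sp' hU' hA); rewrite eQ UQC.
Qed.

Lemma GU_quot (Q1 : {set {set T1}}) (Q2 : {set {set T2}}) :
  admissible G1 Q1 -> admissible G2 Q2 ->
  GU f1 f2 (quot G1 Q1) (quot G2 Q2) (quot G (UQ f1 f2 Q1 Q2)).
Proof.
move=> h1 h2; have p1 := adm_part h1; have p2 := adm_part h2.
have pU := UQ_part sp p1 p2.
split; first by rewrite !gV_quot.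
rewrite !gE_quot //; apply/setP => e; apply/idP/idP.
  case/quot_edgesP => C [D [v [w [CQ DQ CD [vwE vC wD ->]]]]].
  have [vV _ _] := edge_vert vwE.
  move: vV; case: (hU) => -> _; case/setUP => /imsetP[a aV ea]; rewrite ea in vwE vC.
    by rewrite inE (qe_pull1 sp hU CQ DQ CD aV vwE vC wD).
  rewrite UQC in CQ DQ.
  by rewrite inE (qe_pull1 sp' hU' CQ DQ CD aV vwE vC wD) orbT.
case/setUP => /imsetP[e1 e1E ->].
  exact: (qe_push1 sp hU Q2 e1E).
rewrite UQC; exact: (qe_push1 sp' hU' Q1 e1E).
Qed.

Lemma GU_restr (Q1 : {set {set T1}}) (Q2 : {set {set T2}}) :
  GU f1 f2 (restr G1 Q1) (restr G2 Q2) (restr G (UQ f1 f2 Q1 Q2)).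
Proof.
split; first by rewrite !gV_restr; case: hU.
rewrite !gE_restr; apply/setP => e; apply/idP/idP.
  move=> eR; have := subsetP (restr_sub _ _) e eR; case: (hU) => _ ->.
  case/setUP => /imsetP[e1 e1E ee]; rewrite ee in eR *.
    by apply/setUP; left; rewrite (Fe_mem (sp_inj1 sp)) (re_pull1 sp e1E eR).
  rewrite UQC in eR.
  by apply/setUP; right; rewrite (Fe_mem (sp_inj2 sp)) (re_pull1 sp' e1E eR).
case/setUP => /imsetP[e1 e1E ->].
  exact: (re_push1 sp hU Q2 e1E).
rewrite UQC; exact: (re_push1 sp' hU' Q1 e1E).
Qed.

Lemma GU_card : #|gE G| = (#|gE G1| + #|gE G2|)%N.
Proof.
case: (hU) => _ ->; rewrite cardsU.
have -> : Fe f1 (gE G1) :&: Fe f2 (gE G2) = set0.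
  apply/setP => e; rewrite !inE; apply/negP => /andP[/imsetP[e1 e1E ->] /imsetP[e2 e2E ee]].
  case/gEP: e1E => a [b [aV _ _ ea]]; case: (vert_neq0 aV) => x xa.
  have : f1 @: a \in Fv f2 e2 by rewrite -ee ea Fv2 set21.
  by case/imsetP => c _ ec; move: (im_disj sp c xa); rewrite ec eqxx.
rewrite cards0 subn0 !card_imset //; apply: Fv_inj; [exact: (sp_inj2 sp) | exact: (sp_inj1 sp)].
Qed.

Lemma GU_eps (K : fieldType) : eps' K U G = eps' K T1 G1 * eps' K T2 G2.
Proof.
rewrite /eps' -!cards_eq0 GU_card addn_eq0.
by case: (_ == 0)%N; case: (_ == 0)%N; rewrite ?mulr1 ?mul0r ?mulr0.
Qed.

End Split4.

Lemma Fv_comp (T T' U : finType) (f : T -> T') (g : T' -> U) V :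
  Fv g (Fv f V) = Fv (g \o f) V.
Proof.
rewrite /Fv -imset_comp; apply: eq_imset => B /=; by rewrite imset_comp.
Qed.

Lemma Fe_comp (T T' U : finType) (f : T -> T') (g : T' -> U) E :
  Fe g (Fe f E) = Fe (g \o f) E.
Proof.
rewrite /Fe -imset_comp; apply: eq_imset => e /=; by rewrite Fv_comp.
Qed.

Lemma split_sum (T1 T2 : finType) : split_of (@inl T1 T2) (@inr T1 T2).
Proof.
split => //; [exact: inl_inj | exact: inr_inj |].
by case=> [x|y]; [left; exists x | right; exists y].
Qed.

Section UnionGraph.
Variables (T1 T2 U : finType) (f1 : T1 -> U) (f2 : T2 -> U).
Hypothesis sp : split_of f1 f2.

Lemma is_graph_U (G1 : graph T1) (G2 : graph T2) :
  is_graph (UQ f1 f2 (gV G1) (gV G2), Fe f1 (gE G1) :|: Fe f2 (gE G2)).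
Proof.
apply/andP; split; first by have := UQ_part sp (gVP G1) (gVP G2).
apply/forall_inP => e /=; case/setUP => /imsetP[e1 e1E ->];
  case/gEP: e1E => a [b [aV bV ab ->]]; rewrite Fv2 cards2.
  rewrite (inj_eq (imV_inj (sp_inj1 sp))) ab andbT.
  by apply/subsetP => u /set2P[] ->; rewrite inE imset_f.
rewrite (inj_eq (imV_inj (sp_inj2 sp))) ab andbT.
by apply/subsetP => u /set2P[] ->; rewrite inE imset_f ?orbT.
Qed.

Definition Ugraph (G1 : graph T1) (G2 : graph T2) : graph U :=
  exist (fun g : rawgraph U => is_graph g) _ (is_graph_U G1 G2).

Lemma Ugraph_GU G1 G2 : GU f1 f2 G1 G2 (Ugraph G1 G2).
Proof. by []. Qed.

Lemma card_UQ (V1 : {set {set T1}}) (V2 : {set {set T2}}) :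
  set0 \notin V1 -> #|UQ f1 f2 V1 V2| = (#|V1| + #|V2|)%N.
Proof.
move=> n1; rewrite /UQ cardsU.
have -> : Fv f1 V1 :&: Fv f2 V2 = set0.
  apply/setP => C; rewrite !inE; apply/negP => /andP[/imsetP[C1 C1V ->] /imsetP[C2 _ e]].
  have : C1 != set0 by apply/negP => /eqP h; move: n1; rewrite -h C1V.
  by case/set0Pn => x xC; move: (im_disj sp C2 xC); rewrite e eqxx.
rewrite cards0 subn0 /Fv !card_imset //; apply: imV_inj; [exact: (sp_inj2 sp)|exact: (sp_inj1 sp)].
Qed.

Variables (G1 : graph T1) (G2 : graph T2) (G : graph U).
Hypothesis hU : GU f1 f2 G1 G2 G.

Lemma sum_UQ (K : fieldType) (F : {set {set U}} -> K) :
  \sum_(Q | admissible G Q) F Q =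
  \sum_(Q1 | admissible G1 Q1) \sum_(Q2 | admissible G2 Q2) F (UQ f1 f2 Q1 Q2).
Proof.
rewrite pair_big_dep /=.
pose A := [set p : {set {set T1}} * {set {set T2}} | admissible G1 p.1 && admissible G2 p.2].
pose h (p : {set {set T1}} * {set {set T2}}) := UQ f1 f2 p.1 p.2.
have hinj : {in A &, injective h}.
  move=> [Q1 Q2] [Q1' Q2']; rewrite !inE /= => /andP[a1 a2] /andP[a1' a2'] e.
  have n := fun T (G : graph T) Q (hA : admissible G Q) => let: And3 _ _ n := and3P (adm_part hA) in n.
  by case: (UQ_inj sp (n _ _ _ a1) (n _ _ _ a2) (n _ _ _ a1') (n _ _ _ a2') e) => -> ->.
transitivity (\sum_(Q in h @: A) F Q).
  apply: eq_bigl => Q; apply/idP/idP.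
    case/(adm_decomp sp hU) => Q1 [Q2 [a1 a2 ->]].
    by apply/imsetP; exists (Q1, Q2) => //; rewrite inE a1 a2.
  by case/imsetP => [[Q1 Q2]]; rewrite inE /= => /andP[a1 a2] ->; exact: (adm_push sp hU a1 a2).
rewrite big_imset //; apply: eq_bigl => p; by rewrite inE.
Qed.

End UnionGraph.

Section Char.
Local Unset Implicit Arguments.
Variables (K : fieldType) (lam : gfamily K).
Hypothesis hl : is_character lam.
Local Set Implicit Arguments.

Lemma lam_bij : bij_invariant lam. Proof. by case: hl. Qed.
Lemma lam_mult : Defs.multiplicative lam. Proof. by case: hl. Qed.
Lemma lam_unit : unital lam. Proof. by case: hl. Qed.

Lemma lam_GU (T1 T2 U : finType) (f1 : T1 -> U) (f2 : T2 -> U) (sp : split_of f1 f2)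
  G1 G2 G : GU f1 f2 G1 G2 G -> lam U G = lam T1 G1 * lam T2 G2.
Proof.
move=> [hV hE].
pose H := Ugraph (split_sum T1 T2) G1 G2.
have -> : lam T1 G1 * lam T2 G2 = lam _ H by rewrite (@lam_mult _ _ G1 G2 H).
pose h (s : T1 + T2) : U := match s with inl x => f1 x | inr y => f2 y end.
have hinj : injective h.
  case=> [x|y] [x'|y'] /= e.
  - by rewrite (sp_inj1 sp e).
  - by move: (sp_disj sp x y'); rewrite e eqxx.
  - by move: (sp_disj sp x' y); rewrite e eqxx.
  - by rewrite (sp_inj2 sp e).
have hbij : bijective h.
  apply: (inj_card_bij hinj).
  have e : h @: [set: T1 + T2] = [set: U].
    apply/setP => u; rewrite inE; apply/imsetP.
    by case: (sp_cov sp u) => [[x ->]|[y ->]]; [exists (inl x) | exists (inr y)].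
  rewrite -cardsT -e; apply: leq_trans (leq_imset_card _ _) _; by rewrite cardsT.
apply: (lam_bij hbij).
  change (gV G = Fv h (UQ inl inr (gV G1) (gV G2))).
  by rewrite hV /UQ /Fv imsetU -!/(Fv _ _) !Fv_comp.
change (gE G = Fe h (Fe inl (gE G1) :|: Fe inr (gE G2))).
by rewrite hE /Fe imsetU -!/(Fe _ _) !Fe_comp.
Qed.

End Char.

Lemma is_graph_disc (T : finType) (P : {set {set T}}) :
  partition P [set: T] -> is_graph (P, set0).
Proof. by move=> hP; apply/andP; split => //; apply/forall_inP => e; rewrite in_set0. Qed.

Definition disc (T : finType) (P : {set {set T}}) (hP : partition P [set: T]) : graph T :=
  exist (fun g : rawgraph T => is_graph g) _ (is_graph_disc hP).

Lemma empty_card (T : finType) (G : graph T) : gV G = set0 -> #|T| = 0%N.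
Proof.
move=> h; apply: eq_card0 => x /=; case: (part_cover x (gVP G)) => B.
by rewrite h in_set0.
Qed.

Lemma split_B (T : finType) (B : {set T}) :
  split_of (fun x : {x : T | x \in B} => val x) (fun x : {x : T | x \notin B} => val x).
Proof.
split.
- exact: val_inj.
- exact: val_inj.
- move=> [x xB] [y yB] /=; apply/eqP => e; move: yB; by rewrite -e xB.
move=> u; case uB: (u \in B).
  by left; exists (exist _ u uB).
have uB' : u \notin B by rewrite uB.
by right; exists (exist _ u uB').
Qed.

Section NZ.
Local Unset Implicit Arguments.
Variables (K : fieldType) (lam : gfamily K).
Hypothesis hl : is_character lam.
Hypothesis h1 : forall (T : finType), (0 < #|T|)%N ->
      forall G : graph T, gV G = [set [set: T]] -> lam T G != 0.
Local Set Implicit Arguments.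

Lemma lam_nz_n n : forall (T : finType) (G : graph T), (#|gV G| <= n)%N -> gE G = set0 -> lam T G != 0.
Proof.
elim: n => [|n IH] T G hc h0.
  have : gV G = set0 by apply/eqP; rewrite -cards_eq0 -leqn0.
  by move/empty_card => T0; rewrite (lam_unit hl T0) oner_neq0.
have [le|gt] := leqP #|gV G| n; first exact: IH.
have hc' : #|gV G| = n.+1 by apply/eqP; rewrite eqn_leq hc gt.
have : (0 < #|gV G|)%N by rewrite hc'.
case/card_gt0P => B BV.
have [x xB] := vert_neq0 BV.
have eqB : forall C y, C \in gV G -> y \in C -> y \in B -> C = B.
  by move=> C y CV yC yB; apply: (part_uniq (gVP G) CV BV yC yB).
have [single|notsingle] := eqVneq (gV G) [set B].
  apply: h1; first by apply/card_gt0P; exists x.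
  suff -> : [set: T] = B by [].
  apply/setP => y; rewrite inE; case: (part_cover y (gVP G)) => C.
  by rewrite single => /set1P ->.
pose sp := split_B B.
pose V1 := [set C1 : {set {x : T | x \in B}} | [set val y | y in C1] \in gV G].
pose V2 := [set C2 : {set {x : T | x \notin B}} | [set val y | y in C2] \in gV G].
have eqV : gV G = UQ (fun x : {x : T | x \in B} => val x) (fun x : {x : T | x \notin B} => val x) V1 V2.
  apply/setP => C; apply/idP/idP.
    move=> CV; apply/setUP.
    have [CB|nCB] := eqVneq C B.
      left; rewrite -(@im_preim _ _ (fun x : {x : T | x \in B} => val x) C).
        by apply: imset_f; rewrite inE im_preim // CB; apply/subsetP => y yB; apply/imsetP; exists (exist _ y yB).
      by rewrite CB; apply/subsetP => y yB; apply/imsetP; exists (exist _ y yB).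
    have Csub : C \subset [set val y | y in [set: {x : T | x \notin B}]].
      apply/subsetP => y yC; have yB : y \notin B.
        by apply/negP => yB; case/eqP: nCB; apply: eqB yC yB.
      by apply/imsetP; exists (exist _ y yB).
    right; rewrite -(@im_preim _ _ (fun x : {x : T | x \notin B} => val x) C) //.
    by apply: imset_f; rewrite inE im_preim.
  by case/setUP => /imsetP[C1 C1V ->]; move: C1V; rewrite inE.
have pU : partition (UQ (fun x : {x : T | x \in B} => val x) (fun x : {x : T | x \notin B} => val x) V1 V2) [set: T].
  by rewrite -eqV; exact: gVP.
have p1 : partition V1 [set: {x : T | x \in B}] := UQ_part1 sp pU.
have p2 : partition V2 [set: {x : T | x \notin B}].
  by have := pU; rewrite UQC => pU'; exact: (UQ_part1 (split_sym sp) pU').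
pose G1 := disc p1. pose G2 := disc p2.
have hU : GU (fun x : {x : T | x \in B} => val x) (fun x : {x : T | x \notin B} => val x) G1 G2 G.
  by split => //; rewrite h0 /G1 /G2 /gE /= /Fe !imset0 setU0.
rewrite (lam_GU hl sp hU).
have n1 : set0 \notin V1 by case/and3P: (p1).
have cU := card_UQ sp V2 n1; rewrite -eqV hc' in cU.
have V1n : (0 < #|V1|)%N.
  apply/card_gt0P.
  move: BV; rewrite eqV => /setUP[] /imsetP[C1 C1V eC1]; first by exists C1.
  have : x \in [set val y | y in C1] by rewrite -eC1.
  by case/imsetP => -[y yB] _ /= exy; move: yB; rewrite -exy xB.
have V2n : (0 < #|V2|)%N.
  apply/card_gt0P.
  have [C CV CB] : exists2 C, C \in gV G & C != B.
    have : ~~ (gV G \subset [set B]).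
      apply/negP => sB; case/eqP: notsingle; apply/eqP; rewrite eqEsubset sB /=.
      by rewrite sub1set.
    by case/subsetPn => C CV; rewrite inE => CB; exists C.
  have [z zC] := vert_neq0 CV.
  move: (CV); rewrite eqV => /setUP[] /imsetP[C1 C1V eC1]; last by exists C1.
  have : z \in [set val y | y in C1] by rewrite -eC1.
  case/imsetP => -[y yB] _ /= ezy; rewrite ezy in zC.
  by case/negP: CB; apply/eqP; apply: (eqB _ _ CV zC).
apply: mulf_neq0; apply: IH => //; rewrite /G1 /G2 /gV /=.
  by rewrite -ltnS cU -addn1 leq_add2l.
by rewrite -ltnS cU -add1n leq_add2r.
Qed.

Lemma lam_nz (T : finType) : nz_edgeless (lam T).
Proof. by move=> H h0; apply: (lam_nz_n (leqnn _) h0). Qed.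

End NZ.

Local Unset Implicit Arguments.
Definition mu (K : fieldType) (lam : gfamily K) : gfamily K := fun T => rinv (lam T).
Arguments mu {K} lam.
Local Set Implicit Arguments.

Lemma edgeless_sum0 (K : fieldType) (T : finType) (l m : graph T -> K) G : gE G = set0 ->
  \sum_(Q | admissible G Q && (restr_edges G Q != gE G)) l (quot G Q) * m (restr G Q) = 0.
Proof. by move=> h0; apply: big1 => Q /andP[_]; rewrite edgeless_full // eqxx. Qed.

Lemma card_full (T1 T2 U : finType) (f1 : T1 -> U) (f2 : T2 -> U) (sp : split_of f1 f2)
  G1 G2 G : GU f1 f2 G1 G2 G -> restr G (UQ f1 f2 (Qc G1) (Qc G2)) = G.
Proof.
move=> hU; apply: restr_full; apply/eqP; rewrite eqEcard restr_sub /=.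
have hR := GU_restr sp hU (Qc G1) (Qc G2).
rewrite -gE_restr (GU_card sp hR) (GU_card sp hU) !gE_restr !Qc_full.
by [].
Qed.

Section Mu.
Local Unset Implicit Arguments.
Variables (K : fieldType) (lam : gfamily K).
Hypothesis hl : is_character lam.
Hypothesis h1 : forall (T : finType), (0 < #|T|)%N ->
      forall G : graph T, gV G = [set [set: T]] -> lam T G != 0.
Local Set Implicit Arguments.

Lemma nzl (T : finType) : nz_edgeless (lam T). Proof. exact: lam_nz hl h1 T. Qed.

Lemma mu_star (T : finType) G : starT (lam T) (mu lam T) G = epsT K G.
Proof. rewrite /mu; apply: rinv_star; exact: nzl. Qed.

Lemma mu_star_l (T : finType) G : starT (mu lam T) (lam T) G = epsT K G.
Proof. rewrite /mu; apply: rinv_left; exact: nzl. Qed.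

Lemma mu_unit : unital (mu lam).
Proof.
move=> T T0 G.
have h0 : gE G = set0.
  apply/setP => e; rewrite in_set0; apply/negP => eE.
  case/gEP: eE => v [w [vV _ _ _]]; case: (vert_neq0 vV) => x _.
  by move: (card0_eq T0 x).
have := mu_star G; rewrite starT_split edgeless_sum0 // addr0.
by rewrite (lam_unit hl T0) mul1r /epsT /eps' h0 eqxx.
Qed.

Lemma mu_GU n : forall (T1 T2 U : finType) (f1 : T1 -> U) (f2 : T2 -> U)
  (sp : split_of f1 f2) G1 G2 G, GU f1 f2 G1 G2 G -> (#|gE G| < n)%N ->
  mu lam U G = mu lam T1 G1 * mu lam T2 G2.
Proof.
elim: n => // n IH T1 T2 U f1 f2 sp G1 G2 G hU hn.
have e := mu_star G; rewrite /starT (sum_UQ sp hU) in e.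
set c1 := lam T1 (quot G1 (Qc G1)); set c2 := lam T2 (quot G2 (Qc G2)).
set D := mu lam U G - mu lam T1 G1 * mu lam T2 G2.
pose A1 Q1 := lam T1 (quot G1 Q1) * mu lam T1 (restr G1 Q1).
pose A2 Q2 := lam T2 (quot G2 Q2) * mu lam T2 (restr G2 Q2).
have term : forall Q1 Q2, admissible G1 Q1 -> admissible G2 Q2 ->
    lam U (quot G (UQ f1 f2 Q1 Q2)) * mu lam U (restr G (UQ f1 f2 Q1 Q2)) =
    A1 Q1 * A2 Q2 + (if (Q1 == Qc G1) && (Q2 == Qc G2) then c1 * c2 * D else 0).
  move=> Q1 Q2 a1 a2; rewrite (lam_GU hl sp (GU_quot sp hU a1 a2)) /A1 /A2.
  case: ifP => [/andP[/eqP e1 /eqP e2] | hne].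
    rewrite e1 e2 (card_full sp hU) !restr_full ?Qc_full // /c1 /c2 /D.
    ring.
  have hR := GU_restr sp hU Q1 Q2.
  rewrite (IH _ _ _ _ _ sp _ _ _ hR); last first.
    rewrite ltnS in hn; apply: (leq_trans _ hn); rewrite (GU_card sp hR) (GU_card sp hU).
    have l1 : (#|gE (restr G1 Q1)| <= #|gE G1|)%N by rewrite gE_restr subset_leq_card ?restr_sub.
    have l2 : (#|gE (restr G2 Q2)| <= #|gE G2|)%N by rewrite gE_restr subset_leq_card ?restr_sub.
    case/negbT/nandP: hne => hne.
      have : restr_edges G1 Q1 != gE G1.
        by apply/negP => /eqP hf; case/negP: hne; apply/eqP; apply: Qc_uniq.
      by move/restr_lt => lt1; rewrite -addSn leq_add.
    have : restr_edges G2 Q2 != gE G2.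
      by apply/negP => /eqP hf; case/negP: hne; apply/eqP; apply: Qc_uniq.
    by move/restr_lt => lt2; rewrite -addnS leq_add.
  by rewrite addr0; ring.
have e' : \sum_(Q1 | admissible G1 Q1) \sum_(Q2 | admissible G2 Q2)
    (A1 Q1 * A2 Q2 + (if (Q1 == Qc G1) && (Q2 == Qc G2) then c1 * c2 * D else 0)) = epsT K G.
  rewrite -e; apply: eq_bigr => Q1 a1; apply: eq_bigr => Q2 a2; by rewrite term.
have s1 : \sum_(Q1 | admissible G1 Q1) A1 Q1 = epsT K G1 by exact: mu_star.
have s2 : \sum_(Q2 | admissible G2 Q2) A2 Q2 = epsT K G2 by exact: mu_star.
have sd : \sum_(Q1 | admissible G1 Q1) \sum_(Q2 | admissible G2 Q2)
    (if (Q1 == Qc G1) && (Q2 == Qc G2) then c1 * c2 * D else 0) = c1 * c2 * D.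
  rewrite (bigD1 (Qc G1)) ?Qc_adm //=.
  rewrite [X in _ + X]big1 ?addr0; last first.
    by move=> Q1 /andP[_ nQ]; apply: big1 => Q2 _; rewrite (negbTE nQ).
  rewrite (bigD1 (Qc G2)) ?Qc_adm //= !eqxx /= [X in _ + X]big1 ?addr0 // => Q2 /andP[_ nQ].
  by rewrite (negbTE nQ).
have sp2 : \sum_(Q1 | admissible G1 Q1) \sum_(Q2 | admissible G2 Q2) (A1 Q1 * A2 Q2) =
    epsT K G1 * epsT K G2.
  rewrite -s1 -s2 mulr_suml; apply: eq_bigr => Q1 _; by rewrite mulr_sumr.
move: e'; under eq_bigr do rewrite big_split /=.
rewrite big_split /= sp2 sd /epsT (GU_eps sp hU) => /eqP.
rewrite -subr_eq0 addrAC subrr add0r mulf_eq0 mulf_eq0 => /orP[/orP[]|].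
- move=> /eqP c0; have q0 : gE (quot G1 (Qc G1)) = set0.
    by rewrite gE_quot ?Qc_part ?full_quot0 ?Qc_adm ?Qc_full.
  by move: (nzl q0); rewrite -/c1 c0 eqxx.
- move=> /eqP c0; have q0 : gE (quot G2 (Qc G2)) = set0.
    by rewrite gE_quot ?Qc_part ?full_quot0 ?Qc_adm ?Qc_full.
  by move: (nzl q0); rewrite -/c2 c0 eqxx.
by rewrite /D subr_eq0 => /eqP.
Qed.


Lemma mu_mult : Defs.multiplicative (mu lam).
Proof.
move=> T1 T2 G1 G2 G hV hE.
apply: (mu_GU (n := (#|gE G|).+1) (split_sum T1 T2)) => //.
Qed.

Lemma void_part : partition (set0 : {set {set void}}) [set: void].
Proof.
apply/partP; split; first by rewrite in_set0.
  by case.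
by move=> x; case: x.
Qed.

Lemma mu_bij : bij_invariant (mu lam).
Proof.
move=> T T' f fb G G' hV hE.
pose G2 := disc void_part.
pose f2 (v : void) : T' := match v with end.
have sp : split_of f f2.
  split; [exact: bij_inj | by case | by move=> x [] |].
  by move=> u; case: fb => g fK gK; left; exists (g u); rewrite gK.
have hU : GU f f2 G G2 G'.
  split.
    by rewrite hV /UQ /Fv /G2 /gV /= imset0 setU0.
  by rewrite hE /Fe /G2 /gE /= imset0 setU0.
rewrite (mu_GU (n := (#|gE G'|).+1) sp hU) //.
by rewrite (mu_unit card_void G2) mulr1.
Qed.

Lemma mu_char : is_character (mu lam).
Proof. by split; [exact: mu_bij | exact: mu_mult | exact: mu_unit]. Qed.

End Mu.

Theorem lemma49' (K : fieldType) (lam : gfamily K) :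
  is_character lam ->
  (star_invertible lam <->
   (forall (T : finType), (0 < #|T|)%N ->
      forall G : graph T, gV G = [set [set: T]] -> lam T G != 0)).
Proof.
move=> hl; split.
  case=> m [hm hs] T T0 G hG.
  have h0 : gE G = set0.
    apply/setP => e; rewrite in_set0; apply/negP => eE.
    case/gEP: eE => v [w [vV wV vw _]]; move: vV wV vw; rewrite hG.
    by move=> /set1P -> /set1P ->; rewrite eqxx.
  have [e _] := hs T G.
  change (starT (lam T) (m T) G = epsT K G) in e.
  rewrite starT_split edgeless_sum0 // addr0 in e.
  have eQ : Qc G = gV G by apply/esym/Qc_uniq; [exact: gV_adm | exact: edgeless_full].
  rewrite eQ quot_gV /epsT /eps' h0 eqxx in e.
  by apply/negP => /eqP z; move: e; rewrite z mul0r => /eqP; rewrite eq_sym oner_eq0.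
move=> h1; exists (mu lam); split; first exact: mu_char.
by move=> T G; split; [exact: mu_star | exact: mu_star_l].
Qed.


Theorem lemma49 (K : fieldType) (lam : gfamily K) :
  is_character lam ->
  (star_invertible lam <->
   (forall (T : finType), (0 < #|T|)%N ->
      forall G : graph T, gV G = [set [set: T]] -> lam T G != 0)).
Proof. exact: lemma49'. Qed.
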